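(* Let $f:\mathbb{R}^n_{>0}\to\mathbb{R}^n_{>0}$ be order-preserving, homogeneous, and multiplicatively convex. If $\mathcal{G}(f)$ has a unique final class $C$, then $f$ is strongly nonnegative if and only if $r(f^{[n]\setminus C}_0)<r(f^C_0)$.
   Context: $[n]=\{1,\dots,n\}$; entrywise order. Order-preserving: $x\le y\Rightarrow f(x)\le f(y)$; homogeneous: $f(tx)=tf(x)$ for $t>0$; multiplicatively convex: each entry of $\log\circ f\circ\exp$ is convex. $f$ extends continuously to an order-preserving homogeneous map on $\mathbb{R}^n_{\ge0}$, again denoted $f$. $P^J_0(x)_j=x_j$ for $j\in J$, $0$ otherwise; $f^J_0=P^J_0fP^J_0$; $r(g)=\inf_{x\in\mathbb{R}^n_{>0}}\max_ig(x)_i/x_i$. $\mathcal{G}(f)$ is the directed graph on $[n]$ with an arc $i\to j$ when $\lim_{t\to\infty}f(\exp(te_{\{j\}}))_i=\infty$. A final class is a strongly connected component with no arcs leaving it. $f$ is strongly nonnegative if $r(f^C_0)=r(f)$ for every final class $C$ and $r(f^C_0)<r(f)$ for every non-final strongly connected component $C$. *)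

(* Defs.v *)
From HB Require Import structures.
From mathcomp Require Import all_boot all_order all_algebra.
From mathcomp Require Import all_classical all_reals all_analysis.
Set Implicit Arguments. Unset Strict Implicit. Unset Printing Implicit Defensive.
Import Order.TTheory GRing.Theory Num.Theory.
Local Open Scope classical_set_scope.
Local Open Scope ring_scope.

Section Defs.
Variables (R : realType) (n : nat).
Notation vec := ('I_n -> R).

Definition posv (x : vec) : Prop := forall i, 0 < x i.
Definition nnegv (x : vec) : Prop := forall i, 0 <= x i.

Definition maps_pos (f : vec -> vec) : Prop := forall x, posv x -> posv (f x).

Definition order_preserving (f : vec -> vec) : Prop :=
  forall x y, posv x -> posv y -> (forall i, x i <= y i) -> forall i, f x i <= f y i.

Definition homogeneous (f : vec -> vec) : Prop :=
  forall (t : R) x, 0 < t -> posv x -> f (fun i => t * x i) = (fun i => t * f x i).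

Definition mult_convex (f : vec -> vec) : Prop :=
  forall i (x y : vec) (l : R), 0 <= l -> l <= 1 ->
    ln (f (fun k => expR (l * x k + (1 - l) * y k)) i)
    <= l * ln (f (fun k => expR (x k)) i) + (1 - l) * ln (f (fun k => expR (y k)) i).

(* The continuous extension of an order-preserving homogeneous f to R^n_{>=0}:
   fbar x = lim_{e -> 0+} f (x + e 1) = inf_{e > 0} f (x + e 1)  (entrywise). *)
Definition fbar (f : vec -> vec) (x : vec) : vec :=
  fun i => inf [set f (fun k => x k + e) i | e in [set e : R | 0 < e]].

Definition P0 (J : {set 'I_n}) (x : vec) : vec :=
  fun j => if j \in J then x j else 0.

Definition fJ0 (f : vec -> vec) (J : {set 'I_n}) : vec -> vec :=
  fun x => P0 J (fbar f (P0 J x)).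

Definition cw_radius (g : vec -> vec) : R :=
  inf [set \big[Order.max/0]_(i < n) (g x i / x i) | x in [set x | posv x]].

Definition arc (f : vec -> vec) (i j : 'I_n) : Prop :=
  forall M : R, exists T : R, forall t : R, T <= t ->
    M < f (fun k => expR (t * (k == j)%:R)) i.

Inductive reach (f : vec -> vec) : 'I_n -> 'I_n -> Prop :=
  | reach_refl i : reach f i i
  | reach_step i j k : arc f i j -> reach f j k -> reach f i k.

Definition scc (f : vec -> vec) (C : {set 'I_n}) : Prop :=
  (exists i, i \in C) /\
  (forall i j, i \in C -> j \in C -> reach f i j) /\
  (forall i j, i \in C -> reach f i j -> reach f j i -> j \in C).

Definition final_class (f : vec -> vec) (C : {set 'I_n}) : Prop :=
  scc f C /\ (forall i j, i \in C -> arc f i j -> j \in C).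

Definition strongly_nonnegative (f : vec -> vec) : Prop :=
  (forall C, final_class f C -> cw_radius (fJ0 f C) = cw_radius f) /\
  (forall C, scc f C -> ~ final_class f C -> cw_radius (fJ0 f C) < cw_radius f).

End Defs.

(* Main.v *)
Require Import Defs.
From HB Require Import structures.
From mathcomp Require Import all_boot all_order all_algebra.
From mathcomp Require Import all_classical all_reals all_analysis.
From mathcomp Require Import ring lra.
Import Order.TTheory GRing.Theory Num.Theory.
Local Open Scope ring_scope.

Section Aux.
Variable R : realType.

Lemma inf_img_le (T : Type) (S : set T) (F : T -> R) e :
  S e -> (forall e, S e -> 0 <= F e) -> inf [set F e | e in S] <= F e.
Proof.
move=> Se H; apply: ge_inf; last by exists e.
by exists 0 => _ [e' He' <-]; exact: H.
Qed.

Lemma le_inf_img (T : Type) (S : set T) (F : T -> R) b :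
  (exists e, S e) -> (forall e, S e -> b <= F e) -> b <= inf [set F e | e in S].
Proof.
move=> [e Se] H; apply: lb_le_inf; first by exists (F e), e.
by move=> _ [e' He' <-]; exact: H.
Qed.

Lemma inf_img_lt (T : Type) (S : set T) (F : T -> R) b :
  (exists e, S e) -> inf [set F e | e in S] < b -> exists2 e, S e & F e < b.
Proof.
move=> [e Se] /inf_lt [|_ [e' He' <-] H]; first by exists (F e), e.
by exists e'.
Qed.

Lemma le_eps (a b : R) : (forall e, 0 < e -> a <= b + e) -> a <= b.
Proof. by move=> H; apply/ler_addgt0Pr. Qed.

Lemma conv_mono_bdd (g : R -> R) B :
  (forall a b l, 0 <= l -> l <= 1 -> g (l * a + (1 - l) * b) <= l * g a + (1 - l) * g b) ->
  (forall a b, a <= b -> g a <= g b) -> (forall s, g s <= B) -> forall a b, g a = g b.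
Proof.
move=> hc hm hB.
suff H : forall a b, a < b -> g b <= g a.
  move=> a b; case: (ltgtP a b) => [ab|ba|->] //.
  - by apply/le_anti/andP; split; [apply: hm; exact: ltW | exact: H].
  - by apply/le_anti/andP; split; [exact: H | apply: hm; exact: ltW].
move=> a b ab; rewrite leNgt; apply/negP => gab.
set N := `|B - g b|.
have N0 : 0 <= N by exact: normr_ge0.
have NB : B - g b <= N by exact: ler_norm.
have D0 : 0 < g b - g a by rewrite subr_gt0.
have K0 : 0 < b - a by rewrite subr_gt0.
set t := b + (b - a) * (N + 1) / (g b - g a).
have tb : 0 < t - b.
  have -> : t - b = (b - a) * (N + 1) / (g b - g a) by rewrite /t; ring.
  apply: divr_gt0 => //; apply: mulr_gt0 => //; lra.
have ta : 0 < t - a by lra.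
set l := (t - b) / (t - a).
have l0 : 0 <= l by rewrite /l divr_ge0 // ltW.
have l1 : l <= 1 by rewrite /l ler_pdivrMr // mul1r; lra.
have Hc := hc a t l l0 l1.
have El : l * a + (1 - l) * t = b.
  by rewrite /l; field; rewrite lt0r_neq0.
rewrite El in Hc.
have Hl : l * (t - a) = t - b by rewrite /l divfK // lt0r_neq0.
have H1 : g b * (t - a) <= (l * g a + (1 - l) * g t) * (t - a) by rewrite ler_pM2r.
have E2 : (l * g a + (1 - l) * g t) * (t - a) = g a * (t - b) + g t * ((t - a) - (t - b)).
  by rewrite -Hl; ring.
rewrite E2 in H1.
have Et : (t - b) * (g b - g a) = (b - a) * (N + 1).
  by rewrite /t; field; rewrite lt0r_neq0.
have H2 : 0 <= (b - a) * (g t - g b - N - 1) by nra.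
rewrite pmulr_rge0 // in H2.
have := hB t; lra.
Qed.

End Aux.

Section Main.
Variables (R : realType) (n : nat) (f : ('I_n -> R) -> ('I_n -> R)).
Hypotheses (f_pos : maps_pos f) (f_op : order_preserving f)
  (f_hom : homogeneous f) (f_mc : mult_convex f).

Implicit Types (g h : ('I_n -> R) -> ('I_n -> R)) (x y : 'I_n -> R).

Definition ratio (g : ('I_n -> R) -> ('I_n -> R)) x :=
  \big[Order.max/0]_(i < n) (g x i / x i).

Lemma ratio_ge0 g x : 0 <= ratio g x.
Proof.
by rewrite /ratio bigmax_idl le_max lexx.
Qed.

Lemma one_pos : posv (fun _ : 'I_n => (1 : R)).
Proof. by move=> i. Qed.

Lemma cw_ge0 g : 0 <= cw_radius g.
Proof.
apply: le_inf_img; first by exists (fun _ => 1); exact: one_pos.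
move=> x _; exact: ratio_ge0.
Qed.

Lemma cw_le g x b : posv x -> 0 <= b -> (forall i, g x i <= b * x i) ->
  cw_radius g <= b.
Proof.
move=> px b0 H.
apply: (le_trans (@inf_img_le R _ [set x | posv x] (ratio g) x _ _)).
- exact: px.
- move=> y _; exact: ratio_ge0.
apply/bigmax_leP; split => // i _.
by rewrite ler_pdivrMr // px.
Qed.

Lemma cw_lt g b : cw_radius g < b ->
  exists x, posv x /\ forall i, g x i <= b * x i.
Proof.
move=> /inf_img_lt [|x px H]; first by exists (fun _ => 1); exact: one_pos.
exists x; split => // i.
move/bigmax_ltP: H => [_ /(_ i isT)].
by rewrite ltr_pdivrMr ?px // => /ltW.
Qed.

Lemma cw_ge g b : (forall x, posv x -> exists i, b * x i <= g x i) ->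
  b <= cw_radius g.
Proof.
move=> H; apply: le_inf_img; first by exists (fun _ => 1); exact: one_pos.
move=> x px; have [i Hi] := H x px.
apply: le_trans (le_bigmax _ _ i).
by rewrite ler_pdivlMr ?px.
Qed.

Lemma cw_mono g h : (forall x, posv x -> forall i, g x i <= h x i) ->
  cw_radius g <= cw_radius h.
Proof.
move=> H; apply: le_inf_img; first by exists (fun _ => 1); exact: one_pos.
move=> x px.
apply: (le_trans (@inf_img_le R _ [set x | posv x] (ratio g) x _ _)).
- exact: px.
- move=> y _; exact: ratio_ge0.
apply/bigmax_leP; split; first exact: ratio_ge0.
move=> i _; apply: le_trans (le_bigmax _ _ i).
by rewrite ler_pM2r ?invr_gt0 ?px ?H.
Qed.


Lemma P0_nneg (J : {set 'I_n}) {x} : nnegv x -> nnegv (P0 J x).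
Proof. by move=> nx k; rewrite /P0; case: ifP. Qed.

Lemma pos_nneg {x} : posv x -> nnegv x.
Proof. by move=> px k; apply/ltW. Qed.

Lemma shift_pos x e : nnegv x -> 0 < e -> posv (fun k => x k + e).
Proof. by move=> nx e0 k; have := nx k; lra. Qed.

Lemma fbar_le x i e : nnegv x -> 0 < e -> fbar f x i <= f (fun k => x k + e) i.
Proof.
move=> nx e0; rewrite /fbar.
apply: (@inf_img_le R R [set e : R | 0 < e] (fun e => f (fun k => x k + e) i) e) => //.
by move=> e' He'; apply/ltW/f_pos/shift_pos.
Qed.

Lemma fbar_glb x i b : (forall e, 0 < e -> b <= f (fun k => x k + e) i) ->
  b <= fbar f x i.
Proof.
move=> H; rewrite /fbar.
apply: (@le_inf_img R R [set e : R | 0 < e] (fun e => f (fun k => x k + e) i)) => //.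
by exists 1; rewrite /= ltr01.
Qed.

Lemma fbar_ge0 x i : nnegv x -> 0 <= fbar f x i.
Proof.
move=> nx; apply: fbar_glb => e' He'; apply/ltW/f_pos/shift_pos => //.
Qed.

Lemma fbar_lt x i b : nnegv x -> fbar f x i < b ->
  exists2 e, 0 < e & f (fun k => x k + e) i < b.
Proof.
move=> nx; rewrite /fbar.
move=> /(@inf_img_lt R R [set e : R | 0 < e] (fun e => f (fun k => x k + e) i)) [|e He H].
  by exists 1; rewrite /= ltr01.
by exists e.
Qed.

Lemma fbar_mono x y i : nnegv x -> (forall k, x k <= y k) ->
  fbar f x i <= fbar f y i.
Proof.
move=> nx xy.
have ny : nnegv y by move=> k; apply: le_trans (nx k) (xy k).
apply: fbar_glb => e He; apply: le_trans (@fbar_le x i e nx He) _.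
apply: f_op; try exact: shift_pos.
by move=> k; rewrite lerD2r.
Qed.

Lemma fbar_ext x y i : (forall e, 0 < e -> f (fun k => x k + e) i = f (fun k => y k + e) i) ->
  fbar f x i = fbar f y i.
Proof.
move=> H; rewrite /fbar; congr inf; apply/seteqP; split => _ [e He <-]; exists e => //.
  by rewrite H.
by rewrite H.
Qed.

Lemma fbar_pos x i : posv x -> fbar f x i = f x i.
Proof.
move=> px; apply/le_anti/andP; split; last first.
  apply: fbar_glb => e He; apply: f_op => //; first by apply/shift_pos => //; exact: pos_nneg.
  by move=> k; rewrite lerDl ltW.
apply: le_eps => eps eps0.
set m := \big[Order.min/1]_k x k.
have m0 : 0 < m by apply: lt_bigmin => // k _; exact: px.
have mx : forall k, m <= x k by move=> k; exact: bigmin_le.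
have fx0 : 0 < f x i by exact: f_pos.
set d := eps / f x i.
have d0 : 0 < d by rewrite divr_gt0.
apply: le_trans (@fbar_le x i _ (pos_nneg px) (mulr_gt0 d0 m0)) _.
have -> : f x i + eps = (1 + d) * f x i.
  by rewrite /d mulrDl mul1r mulrAC -mulrA divff ?mulr1 // gt_eqF.
have <- : f (fun k => (1 + d) * x k) i = (1 + d) * f x i.
  by rewrite f_hom //; lra.
apply: f_op.
- by apply: shift_pos; [exact: pos_nneg | exact: mulr_gt0].
- by move=> k; apply: mulr_gt0 (px k); lra.
move=> k; rewrite mulrDl mul1r lerD2l ler_pM2l //; exact: mx.
Qed.

Definition rad (J : {set 'I_n}) := cw_radius (fJ0 f J).

Lemma fJ0_ge0 (J : {set 'I_n}) x i : posv x -> 0 <= fJ0 f J x i.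
Proof.
move=> px; rewrite /fJ0 /P0; case: ifP => // _.
by apply: fbar_ge0; apply: P0_nneg; exact: pos_nneg.
Qed.

Lemma P0T x : P0 [set: 'I_n] x = x.
Proof. by apply: funext => k; rewrite /P0 finset.in_setT. Qed.

Lemma rad_setT : rad [set: 'I_n] = cw_radius f.
Proof.
have E : forall x, posv x -> forall i, fJ0 f [set: 'I_n] x i = f x i.
  by move=> x px i; rewrite /fJ0 !P0T fbar_pos.
apply/le_anti/andP; split; apply: cw_mono => x px i; rewrite E //.
Qed.

Lemma rad_mono {J K : {set 'I_n}} : J \subset K -> rad J <= rad K.
Proof.
move=> JK; apply: cw_mono => x px i.
rewrite /fJ0 {1}/P0; case: ifP => iJ; last exact: fJ0_ge0.
rewrite /P0 (fintype.subsetP JK _ iJ); apply: fbar_mono; first by apply: P0_nneg; exact: pos_nneg.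
move=> k; case: ifP => kJ; first by rewrite (fintype.subsetP JK _ kJ).
by case: ifP => // _; apply/ltW.
Qed.

Lemma rad0 : rad (finset.set0 : {set 'I_n}) <= 0.
Proof.
apply: (@cw_le _ (fun _ => 1)) => // i.
by rewrite /fJ0 /P0 finset.in_set0 mul0r.
Qed.

Lemma r_pos (i0 : 'I_n) : 0 < cw_radius f.
Proof.
set c := \big[Order.min/1]_k f (fun _ => 1) k.
have c0 : 0 < c by apply: lt_bigmin => // k _; apply: f_pos; exact: one_pos.
apply: lt_le_trans c0 _; apply: cw_ge => x px.
case: (@arg_minP _ _ _ i0 xpredT x isT) => k _ Hk; exists k.
apply: le_trans (_ : x k * f (fun _ => 1) k <= _).
  by rewrite [c * _]mulrC ler_pM2l ?px //; exact: bigmin_le.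
have <- : f (fun _ => x k * 1) k = x k * f (fun _ => 1) k by rewrite f_hom //; exact: one_pos.
apply: f_op => //; first by move=> l; rewrite mulr1.
by move=> l; rewrite mulr1; exact: Hk.
Qed.

Definition upd x (j : 'I_n) (v : R) := fun k => if k == j then v else x k.

Lemma indep1 (i j : 'I_n) u v : ~ Defs.arc f i j -> posv u -> 0 < v -> f (upd u j v) i = f u i.
Proof.
move=> narc pu v0.
have [M HM] : exists M, forall T, exists t, T <= t /\ f (fun k => expR (t * (k == j)%:R)) i <= M.
  apply: contrapT => H; apply: narc => M; apply: contrapT => H2; apply: H; exists M => T.
  apply: contrapT => H3; apply: H2; exists T => t Tt; rewrite ltNge; apply/negP => H4.
  by apply: H3; exists t.
pose es := fun s : R => (fun k : 'I_n => expR (s * (k == j)%:R)).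
have pes : forall s, posv (es s) by move=> s k; exact: expR_gt0.
have HMs : forall s, f (es s) i <= M.
  move=> s; have [t [st Ht]] := HM s; apply: le_trans Ht.
  apply: f_op; [exact: pes | exact: (pes t) | move=> k].
  by rewrite /es ler_expR ler_wpM2r // ler0n.
set c := 1 + \sum_k u k.
have sum0 : forall k, 0 <= \sum_(l | l != k) u l.
  by move=> k; apply: sumr_ge0 => l _; apply/ltW.
have uc : forall k, u k <= c.
  by move=> k; rewrite /c (bigD1 k) //=; have := sum0 k; lra.
have c1 : 1 <= c.
  by rewrite /c lerDl; apply: sumr_ge0 => l _; apply/ltW.
have c0 : 0 < c by lra.
have M0 : 0 < M by apply: lt_le_trans (HMs 0); apply: f_pos.
set g := fun s => ln (f (upd u j (expR s)) i).
have pupd : forall w, 0 < w -> posv (upd u j w) by move=> w w0 k; rewrite /upd; case: ifP.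
have hB : forall s, g s <= ln (c * M).
  move=> s; rewrite /g ler_ln ?posrE; last 2 first.
  - by apply: f_pos; apply: pupd; exact: expR_gt0.
  - exact: mulr_gt0.
  apply: le_trans (_ : f (fun k => c * es s k) i <= _).
    apply: f_op; [apply: pupd; exact: expR_gt0 | move=> k; apply: mulr_gt0 => //; exact: pes | move=> k].
    rewrite /upd /es; case: ifP => kj /=.
      by rewrite mulr1n mulr1; have := expR_gt0 s; nra.
    by rewrite mulr0n mulr0 expR0 mulr1.
  by rewrite f_hom //= ler_pM2l.
have hmono : forall a b, a <= b -> g a <= g b.
  move=> a b ab; rewrite /g ler_ln ?posrE; last 2 first.
  - by apply: f_pos; apply: pupd; exact: expR_gt0.
  - by apply: f_pos; apply: pupd; exact: expR_gt0.
  apply: f_op; try (by apply: pupd; exact: expR_gt0).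
  by move=> k; rewrite /upd; case: ifP => _ //; rewrite ler_expR.
have E : forall w, (fun k => expR (if k == j then w else ln (u k))) = upd u j (expR w).
  by move=> w; apply: funext => k; rewrite /upd; case: ifP => // _; rewrite lnK // posrE.
have hconv : forall a b l, 0 <= l -> l <= 1 ->
    g (l * a + (1 - l) * b) <= l * g a + (1 - l) * g b.
  move=> a b l l0 l1.
  have := f_mc i (fun k => if k == j then a else ln (u k))
                 (fun k => if k == j then b else ln (u k)) l l0 l1.
  have -> : (fun k => expR (l * (if k == j then a else ln (u k)) +
                 (1 - l) * (if k == j then b else ln (u k)))) =
            upd u j (expR (l * a + (1 - l) * b)).
    apply: funext => k; rewrite /upd; case: ifP => // _.
    have -> : l * ln (u k) + (1 - l) * ln (u k) = ln (u k) by ring.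
    by rewrite lnK // posrE.
  by rewrite !E.
have := @conv_mono_bdd R g _ hconv hmono hB (ln v) (ln (u j)).
have fp : forall w, 0 < w -> 0 < f (upd u j w) i by move=> w w0; apply: f_pos; exact: pupd.
move/(congr1 expR); rewrite /g !lnK ?posrE //; try (by apply: fp => //).
move=> ->.
congr (f _ i); apply: funext => k; rewrite /upd; case: eqP => [->|] //.
Qed.

Lemma indep (i : 'I_n) (L : {set 'I_n}) u w :
  (forall j, j \in L -> ~ Defs.arc f i j) -> posv u -> posv w ->
  (forall k, k \notin L -> u k = w k) -> f u i = f w i.
Proof.
move=> nar pu pw.
move: {2}#|[set k | u k != w k]| (leqnn #|[set k | u k != w k]|) => N.
elim: N u pu => [|N IH] u pu hN hL.
  case: (pickP [pred k | u k != w k]) => [k0 Hk0 | Hnone].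
    have : (0 < #|[set k | u k != w k]|)%N by apply/card_gt0P; exists k0; rewrite inE.
    by rewrite leqn0 in hN; rewrite (eqP hN).
  congr (f _ i); apply: funext => k; by have := Hnone k => /= /negbFE/eqP.
case: (pickP [pred k | u k != w k]) => [k0 /= Hk0 | Hnone]; last first.
  congr (f _ i); apply: funext => k; by have := Hnone k => /= /negbFE/eqP.
have Lk0 : k0 \in L.
  apply: contraT => /hL H; by rewrite H eqxx in Hk0.
rewrite -(@indep1 i k0 u (w k0) (nar k0 Lk0) pu (pw k0)).
apply: IH.
- by move=> k; rewrite /upd; case: ifP.
- rewrite -ltnS; apply: leq_trans hN; apply: proper_card; apply/properP; split.
    apply/fintype.subsetP => k; rewrite !inE /upd; have [->|nk] := eqVneq k k0 => //.
  by exists k0; rewrite !inE /upd ?eqxx //.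
- move=> k kL; rewrite /upd; have [Ek|nk] := eqVneq k k0; last exact: hL.
  by rewrite Ek Lk0 in kL.
Qed.


Lemma sum_ge (y : 'I_n -> R) k : posv y -> y k <= \sum_l y l.
Proof.
move=> py; rewrite (bigD1 k) //= lerDl; apply: sumr_ge0 => l _; exact/ltW.
Qed.

Lemma block (K L : {set 'I_n}) : (forall k, k \in K -> k \notin L) ->
  (forall i j, i \in K -> j \in L -> ~ Defs.arc f i j) ->
  rad (K :|: L) <= Num.max (rad K) (rad L).
Proof.
move=> dKL nar.
apply: le_eps => eps0 eps00.
set e := eps0 / 2.
have e0 : 0 < e by rewrite divr_gt0.
have -> : eps0 = 2 * e by rewrite /e; field.
set m := Num.max (rad K) (rad L).
have mK : rad K <= m by rewrite /m le_max lexx.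
have mL : rad L <= m by rewrite /m le_max lexx orbT.
have K0 : 0 <= rad K by exact: cw_ge0.
have [y [py Hy]] := @cw_lt (fJ0 f K) (rad K + e) ltac:(by rewrite ltrDl).
have [x [px Hx]] := @cw_lt (fJ0 f L) (rad L + e) ltac:(by rewrite ltrDl).
have HyK : forall i, i \in K -> fbar f (P0 K y) i <= (rad K + e) * y i.
  by move=> i iK; have := Hy i; rewrite /fJ0 {1}/P0 iK.
have HxL : forall i, i \in L -> fbar f (P0 L x) i <= (rad L + e) * x i.
  by move=> i iL; have := Hx i; rewrite /fJ0 {1}/P0 iL.
have hd : forall i, exists d : R, 0 < d /\
    (i \in L -> f (fun k => P0 L x k + d) i <= (rad L + 2 * e) * x i).
  move=> i; case: (boolP (i \in L)) => iL; last by exists 1; split.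
  have : fbar f (P0 L x) i < (rad L + 2 * e) * x i.
    by apply: le_lt_trans (HxL i iL) _; rewrite ltr_pM2r ?px //; lra.
  case/fbar_lt => [|d d0 Hd]; first by apply: P0_nneg; exact: pos_nneg.
  by exists d; split => // _; apply/ltW.
case: (boolp.choice hd) => dfun Hdfun.
set del := \big[Order.min/1]_k dfun k.
have del0 : 0 < del by apply: lt_bigmin => // k _; case: (Hdfun k).
have delle : forall k, del <= dfun k by move=> k; exact: bigmin_le.
set Y := \sum_k y k.
have yY : forall k, y k <= Y by move=> k; exact: sum_ge.
have Y0 : 0 <= Y by apply: sumr_ge0 => k _; exact/ltW.
set t := 1 + 2 * Y / del.
have t0 : 0 < t.
  have : 0 <= 2 * Y / del by apply: divr_ge0; [apply: mulr_ge0|apply/ltW].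
  rewrite /t; lra.
have ytd : forall k, y k / t <= del / 2.
  move=> k; rewrite ler_pdivrMr //.
  have -> : del / 2 * t = del / 2 + Y by rewrite /t; field; rewrite lt0r_neq0.
  have := yY k; lra.
pose z := fun k => if k \in K then y k else if k \in L then t * x k else 1.
have pz : posv z.
  move=> k; rewrite /z; case: ifP => _; first exact: py.
  by case: ifP => _; [apply: mulr_gt0 | apply: ltr01].
have nz := P0_nneg (K :|: L) (pos_nneg pz).
apply: (@cw_le _ z) => //; first lra.
move=> i; rewrite /fJ0 {1}/P0; case: ifP => iJ; last first.
  by apply: mulr_ge0; [lra | apply/ltW].
case: (boolP (i \in K)) => iK.
  have zi : z i = y i by rewrite /z iK.
  have -> : fbar f (P0 (K :|: L) z) i = fbar f (P0 K y) i.
    apply: fbar_ext => e' e'0; apply: (@indep i L).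
    - by move=> j jL; exact: nar.
    - exact: shift_pos.
    - by apply: shift_pos => //; apply: P0_nneg; exact: pos_nneg.
    move=> k kL; rewrite /P0 /z finset.in_setU (negbTE kL) orbF.
    by case: (k \in K).
  apply: le_trans (HyK i iK) _; rewrite zi ler_pM2r ?py //; lra.
have iL : i \in L by move: iJ; rewrite finset.in_setU (negbTE iK).
have zi : z i = t * x i by rewrite /z (negbTE iK) iL.
have td0 : 0 < t * del / 2 by apply: divr_gt0 => //; apply: mulr_gt0.
apply: le_trans (@fbar_le _ i (t * del / 2) nz td0) _.
have -> : (fun k => P0 (K :|: L) z k + t * del / 2) =
          (fun k => t * (P0 (K :|: L) z k / t + del / 2)).
  by apply: funext => k; field; rewrite lt0r_neq0.
have pw : posv (fun k => P0 (K :|: L) z k / t + del / 2).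
  move=> k; have := nz k => nzk.
  have : 0 <= P0 (K :|: L) z k / t by apply: divr_ge0 => //; exact/ltW.
  have : 0 < del / 2 by apply: divr_gt0.
  lra.
rewrite f_hom //=.
have Hw : f (fun k => P0 (K :|: L) z k / t + del / 2) i <= (rad L + 2 * e) * x i.
  case: (Hdfun i) => di0 /(_ iL) Hdi.
  apply: le_trans Hdi.
  apply: f_op => //.
    by apply: shift_pos => //; apply: P0_nneg; exact: pos_nneg.
  move=> k; rewrite /P0 /z finset.in_setU.
  have dk := delle i.
  case: (boolP (k \in K)) => kK /=.
    rewrite (negbTE (dKL k kK)) add0r.
    have := ytd k; lra.
  case: (boolP (k \in L)) => kL /=.
    rewrite mulrC mulKf ?lt0r_neq0 //.
    lra.
  rewrite mul0r add0r; lra.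
rewrite zi mulrCA ler_pM2l //.
apply: le_trans Hw _; rewrite ler_pM2r ?px //; lra.
Qed.


Lemma reach_trans {i j k} : reach f i j -> reach f j k -> reach f i k.
Proof.
elim=> [j0|a b c Hab _ IH] Hk //; exact: reach_step Hab (IH Hk).
Qed.

Lemma reach_arc {i j k} : reach f i j -> Defs.arc f j k -> reach f i k.
Proof. by move=> H A; apply: reach_trans H (reach_step A (reach_refl _ k)). Qed.

Definition Sof i := [set j | `[< reach f i j /\ reach f j i >]].

Lemma Sof_scc i : scc f (Sof i).
Proof.
split; first by exists i; rewrite inE; apply/asboolP; split; exact: reach_refl.
split.
  move=> j k; rewrite !inE => [[_ Hji] [Hik _]].
  exact: reach_trans Hji Hik.
move=> j k; rewrite !inE => [[Hij Hji]] Hjk Hkj; split.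
  exact: reach_trans Hij Hjk.
exact: reach_trans Hkj Hji.
Qed.

Lemma scc_meet C D : scc f C -> scc f D -> (exists d, d \in D /\ d \in C) -> D = C.
Proof.
move=> [_ [sC mC]] [_ [sD mD]] [d [dD dC]].
apply/setP => k; apply/idP/idP => H.
  by apply: (mC d) => //; [exact: sD | exact: sD].
by apply: (mD d) => //; [exact: sC | exact: sC].
Qed.

Lemma main_sec C : final_class f C -> (forall D, final_class f D -> D = C) ->
  strongly_nonnegative f <-> rad (~: C) < rad C.
Proof.
move=> hC huniq.
have [[[c0 c0C] _] finC] := hC.
have r0 := r_pos c0.
have rCle : rad C <= cw_radius f.
  by rewrite -rad_setT; apply: rad_mono; exact: finset.subsetT.
have blk : cw_radius f <= Num.max (rad C) (rad (~: C)).
  rewrite -rad_setT -(finset.setUCr C); apply: block.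
    by move=> k kC; rewrite finset.in_setC kC.
  move=> i j iC; rewrite finset.in_setC => jC A; by rewrite (finC i j iC A) in jC.
split; last first.
  move=> H.
  have hr : rad C = cw_radius f.
    apply/le_anti/andP; split => //.
    move: blk; rewrite le_max => /orP [//|H2].
    by apply/ltW; apply: le_lt_trans H2 H.
  split.
    by move=> D hD; rewrite (huniq D hD); exact: hr.
  move=> D sD nfD.
  have DA : D \subset ~: C.
    apply/fintype.subsetP => d dD; rewrite finset.in_setC; apply/negP => dC.
    apply: nfD; rewrite (@scc_meet C D hC.1 sD); first exact: hC.
    by exists d.
  change (rad D < cw_radius f).
  by rewrite -hr; apply: le_lt_trans (rad_mono DA) H.
move=> [SN1 SN2].
have hr : rad C = cw_radius f by exact: SN1.
rewrite hr.
suff claim : forall N (J : {set 'I_n}), (#|J| <= N)%N -> J \subset ~: C -> rad J < cw_radius f.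
  by apply: (claim #|~: C|).
have base : rad finset.set0 < cw_radius f by apply: le_lt_trans rad0 r0.
elim=> [|N IH] J hJ hJC.
  by move: hJ; rewrite leqn0 cards_eq0 => /eqP ->.
case: (set_0Vmem J) => [->|[i1 i1J]] //.
pose RS := fun i => [set j in J | `[< reach f i j >]].
case: (@arg_minnP _ i1 (mem J) (fun i => #|RS i|) i1J) => i iJ imin.
set K := RS i; set L := J :\: K.
have KJ : K \subset J by apply/fintype.subsetP => k; rewrite inE => /andP [].
have iK : i \in K by rewrite inE; apply/andP; split => //; apply/asboolP; exact: reach_refl.
have JKL : J = K :|: L by rewrite /L -{1}(finset.setID J K) (finset.setIidPr KJ).
have iL : i \notin L by rewrite finset.in_setD iK.
have LJ : L \proper J.
  by apply/properP; split; [exact: finset.subsetDl | exists i].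
have radL : rad L < cw_radius f.
  apply: IH; last exact: fintype.subset_trans (finset.subsetDl _ _) hJC.
  by rewrite -ltnS; apply: leq_trans hJ; exact: proper_card.
rewrite JKL; apply: (le_lt_trans (@block K L _ _)) .
- by move=> k kK; rewrite finset.in_setD kK.
- move=> a b aK bL A; move: bL; rewrite finset.in_setD => /andP [bK bJ].
  move: aK; rewrite inE => /andP [_ /asboolP Hia].
  by move: bK; rewrite inE bJ /=; move/asboolP; apply; exact: reach_arc Hia A.
rewrite gt_max radL andbT.
case: (boolP (J \subset K)) => JK; last first.
  apply: IH; last exact: fintype.subset_trans KJ hJC.
  rewrite -ltnS; apply: leq_trans hJ; apply: proper_card.
  by rewrite properE KJ JK.
have reachJ : forall j, j \in J -> reach f i j /\ reach f j i.
  move=> j jJ.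
  have : j \in K := fintype.subsetP JK j jJ.
  rewrite inE jJ => /asboolP Hij; split => //.
  have RJ : RS j \subset J by apply/fintype.subsetP => k; rewrite inE => /andP [].
  have cardK : #|K| = #|J| by apply/eqP; rewrite eqn_leq (subset_leq_card KJ) (subset_leq_card JK).
  have : RS j == J.
    by rewrite eqEcard RJ /= -cardK; exact: imin.
  move/eqP => E; have : i \in RS j by rewrite E.
  by rewrite inE => /andP [_ /asboolP].
have JS : J \subset Sof i.
  by apply/fintype.subsetP => j jJ; rewrite inE; apply/asboolP; exact: reachJ.
apply: le_lt_trans (rad_mono (fintype.subset_trans KJ JS)) _.
apply: SN2; first exact: Sof_scc.
move=> fS; have := huniq _ fS => E.
have : i \in Sof i by rewrite inE; apply/asboolP; split; exact: reach_refl.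
rewrite E => iC.
by have := fintype.subsetP hJC i iJ; rewrite finset.in_setC iC.
Qed.

End Main.

Theorem lemma4p8 (R : realType) (n : nat) (f : ('I_n -> R) -> ('I_n -> R))
  (f_pos : maps_pos f) (f_op : order_preserving f) (f_hom : homogeneous f)
  (f_mc : mult_convex f) (C : {set 'I_n})
  (hC : final_class f C) (huniq : forall D, final_class f D -> D = C) :
  strongly_nonnegative f <-> cw_radius (fJ0 f (~: C)) < cw_radius (fJ0 f C).
Proof.
exact: (@main_sec R n f f_pos f_op f_hom f_mc C hC huniq).
Qed.
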